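(* Let $E$ be a real affine space of finite dimension, let $\mathcal{P}$ be a Yao-Yao partition of $E$ and let $c$ be its center. Let $\ell$ be an affine form on $E$ such that $\ell(c)=0$. Then there exists $A\in\mathcal{P}$ such that $\ell(x)\geq 0$ for all $x\in A$. Moreover, there is at most one element $A$ of $\mathcal{P}$ such that $\ell(x)>0$ for all $x\in A\setminus\{c\}$.
   Context: For a finite-dimensional real affine space $E$, $\vec{E}$ denotes its associated vector space. A set $\mathcal{P}$ of subsets of $E$ is a partition of $E$ if $\bigcup\mathcal{P}=E$ and the interiors of two distinct elements of $\mathcal{P}$ do not intersect (e.g. $\{(-\infty,a],[a,+\infty)\}$ is a partition of $\mathbb{R}$). Yao-Yao partitions and their centers are defined by induction on the dimension: if $E=\{c\}$ has dimension $0$, then $\mathcal{P}=\{\{c\}\}$ is a Yao-Yao partition of $E$ with center $c$. If $E$ has dimension $n\geq 1$, a set $\mathcal{P}$ is a Yao-Yao partition of $E$ if there exist an affine hyperplane $F$ of $E$, a vector $v\in\vec{E}\setminus\vec{F}$, and two Yao-Yao partitions $\mathcal{P}_+$ and $\mathcal{P}_-$ of $F$ having the same center $c$, such that $\mathcal{P}=\{A+\mathbb{R}_- v : A\in\mathcal{P}_-\}\cup\{A+\mathbb{R}_+ v : A\in\mathcal{P}_+\}$; the center of $\mathcal{P}$ is then $c$. *)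

(* Defs.v *)
(* the ambient real affine space E is modelled as R^n = 'rV[R]_n,
   R : realType.  Affine subspaces of E are given by a base point p and a
   direction {vspace 'rV[R]_n}. *)
From HB Require Import structures.
From mathcomp Require Import all_boot all_order all_algebra.
From mathcomp Require Import boolp classical_sets reals.
Set Implicit Arguments. Unset Strict Implicit. Unset Printing Implicit Defensive.
Import Order.TTheory GRing.Theory Num.Theory.
Local Open Scope ring_scope.
Local Open Scope classical_set_scope.

Definition add_nray {R : realType} {n : nat} (A : set 'rV[R]_n) (v : 'rV[R]_n)
  : set 'rV[R]_n := [set x | exists a t, A a /\ t <= 0 /\ x = a + t *: v].
Definition add_pray {R : realType} {n : nat} (A : set 'rV[R]_n) (v : 'rV[R]_n)
  : set 'rV[R]_n := [set x | exists a t, A a /\ 0 <= t /\ x = a + t *: v].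

(* yao U p P c : P is a Yao-Yao partition, with center c, of the affine
   subspace p + U of R^n (by induction on the dimension of U). *)
Inductive yao {R : realType} {n : nat} :
    {vspace 'rV[R]_n} -> 'rV[R]_n -> set (set 'rV[R]_n) -> 'rV[R]_n -> Prop :=
| yao_dim0 (U : {vspace 'rV[R]_n}) (p : 'rV[R]_n) :
    \dim U = 0%N -> yao U p [set [set p]] p
| yao_dimS (U W : {vspace 'rV[R]_n}) (p q v c : 'rV[R]_n)
    (Pm Pp : set (set 'rV[R]_n)) :
    (0 < \dim U)%N ->
    (* F = q + W is an affine hyperplane of E = p + U *)
    (q - p) \in U -> (W <= U)%VS -> \dim W = (\dim U).-1 ->
    v \in U -> v \notin W ->
    yao W q Pm c -> yao W q Pp c ->
    yao U p ([set B | exists2 A, Pm A & B = add_nray A v]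
             `|` [set B | exists2 A, Pp A & B = add_pray A v]) c.

Definition yao_partition {R : realType} {n : nat}
  (P : set (set 'rV[R]_n)) (c : 'rV[R]_n) : Prop := yao fullv 0 P c.

Definition affine_form {R : realType} {n : nat} (l : 'rV[R]_n -> R) : Prop :=
  exists (a : 'cV[R]_n) (b : R), forall x, l x = (x *m a) 0 0 + b.

(* Main.v *)
Require Import Defs.
From HB Require Import structures.
From mathcomp Require Import all_boot all_order all_algebra.
From mathcomp Require Import boolp classical_sets reals.
From mathcomp Require Import ring.
Import Order.TTheory GRing.Theory Num.Theory.
Local Open Scope ring_scope.
Local Open Scope classical_set_scope.
Set Implicit Arguments.

Lemma center_in (R : realType) (n : nat) U p (P : set (set 'rV[R]_n)) c :
  yao U p P c -> forall A, P A -> A c.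
Proof.
elim => [U0 p0 _ | U0 W p0 q v c0 Pm Pp _ _ _ _ _ _ _ IHm _ IHp] A.
  by move=> ->.
case=> [[A' PA' ->]|[A' PA' ->]]; exists c0, 0; (split; [by [apply: IHm|apply: IHp] | split; [by [] | by rewrite scale0r addr0]]).
Qed.

Lemma aff_ray (R : realType) (n : nat) (l : 'rV[R]_n -> R) x t v :
  affine_form l -> l (x + t *: v) = l x + t * (l v - l 0).
Proof.
case=> a [b hl]; rewrite !hl mulmxDl -scalemxAl mul0mx !mxE.
rewrite mulrBr; ring.
Qed.

Lemma main_gen (R : realType) (n : nat) U p (P : set (set 'rV[R]_n)) c
   (l : 'rV[R]_n -> R) :
  yao U p P c -> affine_form l -> l c = 0 ->
  (exists A, P A /\ forall x, A x -> 0 <= l x) /\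
  (forall A B, P A -> P B ->
     (forall x, A x -> x <> c -> 0 < l x) ->
     (forall x, B x -> x <> c -> 0 < l x) -> A = B).
Proof.
move=> Y hl; elim: Y => [U0 p0 _ | U0 W p0 q v c0 Pm Pp _ _ _ _ _ vW Ym IHm Yp IHp] hc.
  split; first by exists [set p0]; split => // x ->; rewrite hc.
  by move=> A B -> ->.
have [[Am [PAm Am0]] IHm2] := IHm hc.
have [[Ap [PAp Ap0]] IHp2] := IHp hc.
have v0 : v != 0 by apply: contraNneq vW => ->; rewrite mem0v.
set d := l v - l 0.
have key : forall t, t != 0 -> l (c0 + t *: v) = t * d.
  by move=> t _; rewrite aff_ray // hc add0r.
have ne : forall t, t != 0 -> c0 + t *: v <> c0.
  move=> t t0 /eqP; rewrite -subr_eq0 addrC addKr scaler_eq0 (negbTE t0) /=.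
  by rewrite (negbTE v0).
split.
  have [d0|d0] := leP 0 d.
    exists (add_pray Ap v); split; first by right; exists Ap.
    move=> x [a [t [Aa [t0 ->]]]]; rewrite aff_ray // -/d.
    by apply: addr_ge0; [apply: Ap0 | apply: mulr_ge0].
  exists (add_nray Am v); split; first by left; exists Am.
  move=> x [a [t [Aa [t0 ->]]]]; rewrite aff_ray // -/d.
  by apply: addr_ge0; [apply: Am0 | apply: mulr_le0 => //; apply: ltW].
have posP : forall A', Pp A' -> (forall x, add_pray A' v x -> x <> c0 -> 0 < l x) -> 0 < d.
  move=> A' PA' H.
  have := H (c0 + 1 *: v) _ (ne 1 (oner_neq0 _)).
  rewrite key ?oner_neq0 // mul1r; apply.
  exists c0, 1; split; first exact: (center_in Yp _ PA'). by split.
have negP : forall A', Pm A' -> (forall x, add_nray A' v x -> x <> c0 -> 0 < l x) -> d < 0.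
  move=> A' PA' H.
  have m1 : (-1 : R) != 0 by rewrite oppr_eq0 oner_neq0.
  have := H (c0 + (-1) *: v) _ (ne (-1) m1).
  rewrite (key _ m1) mulN1r oppr_gt0; apply.
  by exists c0, (-1); split; [exact: (center_in Ym _ PA') | split; [exact: lerN10 | by []]].
have subp : forall A', (forall x, add_pray A' v x -> x <> c0 -> 0 < l x) ->
   forall x, A' x -> x <> c0 -> 0 < l x.
  move=> A' H x Ax; apply: H; exists x, 0; split => //; split => //.
  by rewrite scale0r addr0.
have subn : forall A', (forall x, add_nray A' v x -> x <> c0 -> 0 < l x) ->
   forall x, A' x -> x <> c0 -> 0 < l x.
  move=> A' H x Ax; apply: H; exists x, 0; split => //; split => //.
  by rewrite scale0r addr0.
move=> A B [[A' PA' ->]|[A' PA' ->]] [[B' PB' ->]|[B' PB' ->]] HA HB.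
- by rewrite (IHm2 A' B' PA' PB' (subn _ HA) (subn _ HB)).
- by have := lt_trans (negP _ PA' HA) (posP _ PB' HB); rewrite ltxx.
- by have := lt_trans (negP _ PB' HB) (posP _ PA' HA); rewrite ltxx.
- by rewrite (IHp2 A' B' PA' PB' (subp _ HA) (subp _ HB)).
Qed.

Theorem mainTheorem1 (R : realType) (n : nat) (P : set (set 'rV[R]_n))
    (c : 'rV[R]_n) (l : 'rV[R]_n -> R) :
  yao_partition P c -> affine_form l -> l c = 0 ->
  (exists A, P A /\ forall x, A x -> 0 <= l x) /\
  (forall A B, P A -> P B ->
     (forall x, A x -> x <> c -> 0 < l x) ->
     (forall x, B x -> x <> c -> 0 < l x) -> A = B).
Proof. exact: main_gen. Qed.
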